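(* For every $n\geq 4$ there exist a convex $n$-gon $Q$ (with vertices $p_1,\dots,p_n$ in cyclic order, $p_i$ labeled $i$) and vectors $x_d\in X_Q$ for every $d\in\mathrm{Diag}_n$ such that $\langle f_d^\perp, x_{d'}\rangle>0$ whenever $d\rhd d'$.
   Context: Let $Q$ be a convex $n$-gon in $\mathbb{R}^2$ with vertices $p_1,\dots,p_n$ in cyclic order; identify $p_i$ with label $i$, so triangulations of $Q$ (using only vertices of $Q$) are identified with elements of $\mathcal{T}_n$ (each triangulation identified with its set of diagonals) and diagonals with elements of $\mathrm{Diag}_n=\{\{i,j\}\subseteq[n]: i-j\not\equiv\pm1 \pmod n\}$. Two diagonals cross if they meet in the interior of $Q$. Let $X_Q$ be the space of formal combinations $\sum_{p\in V(Q)} c_p\cdot p$ with $\sum_p c_p=0$ and $\sum_p c_p p=0$ in $\mathbb{R}^2$; let $X_Q^*$ be the space of functions $V(Q)\to\mathbb{R}$ modulo restrictions of affine functions $\mathbb{R}^2\to\mathbb{R}$, with pairing $\langle[\psi],\sum_p c_p\cdot p\rangle=\sum_p c_p\psi(p)$. For a triangulation $T$ let $v_T=(\operatorname{area}(Q_{T,p}))_{p\in V(Q)}$ where $Q_{T,p}$ is the union of the triangles of $T$ having $p$ as a vertex. The secondary polytope $\Sigma_Q$ is the convex hull of the $v_T$, translated to lie in $X_Q$. It is known (Gelfand–Kapranov–Zelevinsky) that $\Sigma_Q$ is a full-dimensional polytope in the $(n-3)$-dimensional space $X_Q$ realizing the associahedron: its vertices are exactly the points $v_T$, $T\in\mathcal{T}_n$;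 its facets are $f_d$, $d\in\mathrm{Diag}_n$, where $f_d$ contains $v_T$ iff $d\in T$; and an outward normal of $f_d$ is $f_d^\perp=[\psi_d]$, where $\psi_d=\min(\ell_d,0)$ restricted to $V(Q)$ and $\ell_d$ is any nonzero affine function vanishing at both endpoints of $d$. Two facets $f_d,f_{d'}$ share a vertex iff $d,d'$ do not cross. Swapping relation: for $\{i,j\},\{i',j'\}\in\mathrm{Diag}_n$ written with $i<j$ and $i'<j'$, write $\{i,j\}\rhd\{i',j'\}$ if either $\{i,j\}$ and $\{i',j'\}$ do not cross (in particular $d\rhd d$ for every $d$), or $i'<i<j'<j<n$ and $j'-i>1$. *)

(* Defs.v *)
From Stdlib Require Import Reals Lra Lia Arith.
Open Scope R_scope.

Definition pt : Type := (R * R)%type.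

Definition orient (a b c : pt) : R :=
  (fst b - fst a) * (snd c - snd a) - (snd b - snd a) * (fst c - fst a).

Fixpoint sum_lab (n : nat) (f : nat -> R) : R :=
  match n with
  | O => 0
  | S m => sum_lab m f + f (S m)
  end.

(* p 1, ..., p n are the vertices of a convex n-gon, in cyclic order:
   all triples of labels i<j<k are strictly oriented the same way
   (counterclockwise, or clockwise). *)
Definition convex_ngon (n : nat) (p : nat -> pt) : Prop :=
  (forall i j k : nat, (1 <= i)%nat -> (i < j)%nat -> (j < k)%nat -> (k <= n)%nat ->
     orient (p i) (p j) (p k) > 0)
  \/
  (forall i j k : nat, (1 <= i)%nat -> (i < j)%nat -> (j < k)%nat -> (k <= n)%nat ->
     orient (p i) (p j) (p k) < 0).

(* {i,j} in Diag_n, written with i < j : labels in 1..n, not cyclically adjacent. *)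
Definition is_diag (n i j : nat) : Prop :=
  (1 <= i)%nat /\ (i < j)%nat /\ (j <= n)%nat /\ (j <> S i) /\ ~ (i = 1%nat /\ j = n).

(* Diagonals {i,j}, {i',j'} (i<j, i'<j') of a convex polygon cross (meet in
   the interior) iff their endpoints strictly interleave. *)
Definition crossing (i j i' j' : nat) : Prop :=
  ((i < i')%nat /\ (i' < j)%nat /\ (j < j')%nat) \/
  ((i' < i)%nat /\ (i < j')%nat /\ (j' < j)%nat).

Definition swap_rel (n i j i' j' : nat) : Prop :=
  ~ crossing i j i' j' \/
  ((i' < i)%nat /\ (i < j')%nat /\ (j' < j)%nat /\ (j < n)%nat /\ (j' - i > 1)%nat).

(* c : labels -> R is a formal combination sum_k c k * p_k lying in X_Q. *)
Definition in_XQ (n : nat) (p : nat -> pt) (c : nat -> R) : Prop :=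
  sum_lab n c = 0 /\
  sum_lab n (fun k => c k * fst (p k)) = 0 /\
  sum_lab n (fun k => c k * snd (p k)) = 0.

(* psi_d = min(l_d, 0) on the vertices, with l_d the nonzero affine function
   x |-> det(p_j - p_i, x - p_i) vanishing at p_i and p_j. *)
Definition psi (p : nat -> pt) (i j : nat) (k : nat) : R :=
  Rmin (orient (p i) (p j) (p k)) 0.

Definition pairing (n : nat) (p : nat -> pt) (i j : nat) (c : nat -> R) : R :=
  sum_lab n (fun k => c k * psi p i j k).

(* Main.v *)
Require Import Defs.
From Stdlib Require Import Reals Lra Lia Arith.
Open Scope R_scope.

Lemma sum_lab_ext n f g : (forall k, (1 <= k <= n)%nat -> f k = g k) -> sum_lab n f = sum_lab n g.
Proof. induction n; intros H; simpl; auto. rewrite IHn by (intros; apply H; lia). rewrite H by lia. reflexivity. Qed.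

Lemma sum_lab_add n f g : sum_lab n (fun k => f k + g k) = sum_lab n f + sum_lab n g.
Proof. induction n; simpl; [ring|]. rewrite IHn; ring. Qed.

Lemma sum_lab_scal n r f : sum_lab n (fun k => r * f k) = r * sum_lab n f.
Proof. induction n; simpl; [ring|]. rewrite IHn; ring. Qed.

Lemma sum_lab_lin n u v f g : sum_lab n (fun k => u * f k + v * g k) = u * sum_lab n f + v * sum_lab n g.
Proof. rewrite sum_lab_add, !sum_lab_scal; ring. Qed.

Lemma sum_lab_zero n f : (forall k, (1 <= k <= n)%nat -> f k = 0) -> sum_lab n f = 0.
Proof. intros H. transitivity (sum_lab n (fun _ => 0)). apply sum_lab_ext; auto.
 induction n; simpl; auto. rewrite IHn by (intros; apply H; lia). ring. Qed.

Definition ind (a k : nat) : R := if Nat.eqb k a then 1 else 0.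

Lemma sum_ind_mul n a f : (1 <= a <= n)%nat -> sum_lab n (fun k => ind a k * f k) = f a.
Proof. induction n; intros H; [lia|]. simpl. unfold ind at 2.
 destruct (Nat.eqb_spec (S n) a).
 - subst. rewrite sum_lab_zero. ring. intros k Hk. unfold ind. destruct (Nat.eqb_spec k (S n)); [lia|ring].
 - rewrite IHn by lia. ring. Qed.

Lemma sum_lab_nonneg n f : (forall k, (1 <= k <= n)%nat -> 0 <= f k) -> 0 <= sum_lab n f.
Proof. induction n; intros H; simpl; [lra|]. pose proof (H (S n) ltac:(lia)). pose proof (IHn ltac:(intros; apply H; lia)). lra. Qed.

Lemma sum_lab_ge1 n f a : (forall k, (1 <= k <= n)%nat -> k <> a -> 0 <= f k) -> (1 <= a <= n)%nat -> f a <= sum_lab n f.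
Proof. induction n; intros H Ha; [lia|]. simpl. destruct (Nat.eq_dec (S n) a).
 - subst. assert (0 <= sum_lab n f) by (apply sum_lab_nonneg; intros; apply H; lia). lra.
 - assert (f a <= sum_lab n f) by (apply IHn; [intros; apply H; lia| lia]). pose proof (H (S n) ltac:(lia) n0). lra. Qed.

Lemma sum_lab_ge2 n f a c : (forall k, (1 <= k <= n)%nat -> k <> a -> 0 <= f k) -> (1 <= a <= n)%nat -> (1 <= c <= n)%nat -> a <> c ->
  f a + f c <= sum_lab n f.
Proof. induction n; intros H Ha Hc Hac; [lia|]. simpl. destruct (Nat.eq_dec (S n) c).
 - subst. assert (f a <= sum_lab n f) by (apply sum_lab_ge1; [intros; apply H; lia| lia]). lra.
 - destruct (Nat.eq_dec (S n) a).
   + subst. assert (0 <= sum_lab n f) by (apply sum_lab_nonneg; intros; apply H; lia).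
     assert (f c <= sum_lab n f) by (apply sum_lab_ge1; [intros; apply H; lia| lia]). lra.
   + assert (f a + f c <= sum_lab n f) by (apply IHn; auto; [intros; apply H; lia|lia|lia]).
     pose proof (H (S n) ltac:(lia) n1). lra. Qed.

Definition tt (n k : nat) : R := if Nat.ltb k n then - (/2)^k else 1.
Definition pp (n k : nat) : pt := (tt n k, tt n k * tt n k).

Lemma orient_pp n i j k : orient (pp n i) (pp n j) (pp n k) = (tt n j - tt n i) * ((tt n k - tt n i) * (tt n k - tt n j)).
Proof. unfold orient, pp; simpl; ring. Qed.

Lemma half_pow_pos k : 0 < (/2)^k.
Proof. apply pow_lt; lra. Qed.

Lemma half_pow_lt i j : (i < j)%nat -> (/2)^j < (/2)^i.
Proof. intros H. replace j with (i + (j - i))%nat by lia. rewrite pow_add.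
 assert ((/2)^(j-i) < 1). { apply pow_lt_1_compat; [lra|lia]. }
 pose proof (half_pow_pos i). nra. Qed.

Lemma tt_lt n i j : (i < j)%nat -> (j <= n)%nat -> tt n i < tt n j.
Proof. intros H1 H2. unfold tt. destruct (Nat.ltb_spec i n); [|lia].
 destruct (Nat.ltb_spec j n).
 - pose proof (half_pow_lt i j H1). lra.
 - pose proof (half_pow_pos i). lra. Qed.

Lemma tt_le n i j : (i <= j)%nat -> (j <= n)%nat -> tt n i <= tt n j.
Proof. intros H1 H2. destruct (Nat.eq_dec i j). subst; lra. left; apply tt_lt; lia. Qed.

Lemma tt_neg n k : (k < n)%nat -> tt n k < 0.
Proof. intros H. unfold tt. destruct (Nat.ltb_spec k n); [|lia]. pose proof (half_pow_pos k); lra. Qed.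

Lemma tt_n n : tt n n = 1.
Proof. unfold tt. destruct (Nat.ltb_spec n n); [lia|auto]. Qed.

Lemma convex_pp n : convex_ngon n (pp n).
Proof. left. intros i j k H1 H2 H3 H4. rewrite orient_pp.
 pose proof (tt_lt n i j H2 ltac:(lia)). pose proof (tt_lt n i k ltac:(lia) ltac:(lia)). pose proof (tt_lt n j k H3 H4).
 apply Rlt_gt. apply Rmult_lt_0_compat; [lra|]. apply Rmult_lt_0_compat; lra. Qed.

Section Pair.
Variable n : nat.
Let t := tt n.
Let l (i j k : nat) := orient (pp n i) (pp n j) (pp n k).

Lemma l_neg i j k : (i < k)%nat -> (k < j)%nat -> (j <= n)%nat -> l i j k < 0.
Proof. intros. unfold l. rewrite orient_pp.
 pose proof (tt_lt n i j ltac:(lia) ltac:(lia)). pose proof (tt_lt n i k ltac:(lia) ltac:(lia)). pose proof (tt_lt n k j ltac:(lia) ltac:(lia)).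
 assert (0 < (tt n k - tt n i) * (tt n j - tt n k)) by (apply Rmult_lt_0_compat; lra). nra. Qed.

Lemma l_pos i j k : (i < j)%nat -> (k < i \/ j < k)%nat -> (k <= n)%nat -> (j <= n)%nat -> 0 < l i j k.
Proof. intros. unfold l. rewrite orient_pp. pose proof (tt_lt n i j ltac:(lia) ltac:(lia)).
 destruct H0.
 - pose proof (tt_lt n k i ltac:(lia) ltac:(lia)). pose proof (tt_lt n k j ltac:(lia) ltac:(lia)).
   apply Rmult_lt_0_compat; [lra|]. nra.
 - pose proof (tt_lt n i k ltac:(lia) ltac:(lia)). pose proof (tt_lt n j k ltac:(lia) ltac:(lia)).
   apply Rmult_lt_0_compat; [lra|]. nra. Qed.

Lemma l_zero i j k : (k = i \/ k = j)%nat -> l i j k = 0.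
Proof. intros [->| ->]; unfold l; rewrite orient_pp; ring. Qed.

Lemma l_neg_inv i j k : (i < j)%nat -> (j <= n)%nat -> (1 <= k <= n)%nat -> l i j k < 0 -> (i < k < j)%nat.
Proof. intros. destruct (lt_dec i k); destruct (lt_dec k j); try lia.
 - assert (k = j \/ j < k)%nat as [E|E] by lia. rewrite l_zero in H2 by lia; lra. pose proof (l_pos i j k H (or_intror E) ltac:(lia) H0); lra.
 - assert (k = i \/ k < i)%nat as [E|E] by lia. rewrite l_zero in H2 by lia; lra. pose proof (l_pos i j k H (or_introl E) ltac:(lia) H0); lra.
Qed.

Lemma l_pos_inv i j k : (i < j)%nat -> (j <= n)%nat -> (1 <= k <= n)%nat -> 0 < l i j k -> (k < i \/ j < k)%nat.
Proof. intros. destruct (lt_dec k i); [lia|]. destruct (lt_dec j k); [lia|].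
 assert (k = i \/ k = j \/ (i < k < j))%nat as [E|[E|E]] by lia.
 - rewrite l_zero in H2 by lia; lra. - rewrite l_zero in H2 by lia; lra.
 - pose proof (l_neg i j k ltac:(lia) ltac:(lia) H0). lra. Qed.

Lemma sum_c_l i j c : in_XQ n (pp n) c -> sum_lab n (fun k => c k * l i j k) = 0.
Proof. intros [H0 [H1 H2]]. unfold l.
 transitivity (sum_lab n (fun k => ((t j - t i) * t i * t j) * c k + ((-(t j - t i) * (t i + t j)) * (c k * fst (pp n k)) + (t j - t i) * (c k * snd (pp n k))))).
 - apply sum_lab_ext. intros k _. rewrite orient_pp. unfold pp, t. simpl. ring.
 - rewrite sum_lab_add, sum_lab_scal, sum_lab_add, !sum_lab_scal, H0, H1, H2. ring. Qed.

End Pair.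

Definition ll n i j k := orient (pp n i) (pp n j) (pp n k).

Lemma pairing_shift n i j c : in_XQ n (pp n) c ->
  pairing n (pp n) i j c = sum_lab n (fun k => c k * (Rmin (ll n i j k) 0 - ll n i j k)).
Proof. intros H. pose proof (sum_c_l n i j c H) as E. unfold pairing, psi.
 transitivity (sum_lab n (fun k => c k * Rmin (ll n i j k) 0) + (-1) * sum_lab n (fun k => c k * ll n i j k)).
 - unfold ll. rewrite E. ring.
 - rewrite <- sum_lab_scal, <- sum_lab_add. apply sum_lab_ext. intros; ring. Qed.

Lemma caseA n i j c : (1 <= i)%nat -> (i + 2 <= j)%nat -> (j <= n)%nat ->
  (forall k, (i < k < j)%nat -> c k < 0) -> pairing n (pp n) i j c > 0.
Proof. intros Hi Hij Hj Hc. unfold pairing, psi.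
 assert (Hterm : forall k, (1 <= k <= n)%nat -> 0 <= c k * Rmin (orient (pp n i) (pp n j) (pp n k)) 0).
 { intros k Hk. destruct (Rle_dec 0 (orient (pp n i) (pp n j) (pp n k))).
   - rewrite Rmin_right by lra. lra.
   - rewrite Rmin_left by lra. pose proof (l_neg_inv n i j k ltac:(lia) Hj Hk ltac:(lra)). pose proof (Hc k H). nra. }
 assert (Hpos : 0 < c (S i) * Rmin (orient (pp n i) (pp n j) (pp n (S i))) 0).
 { pose proof (l_neg n i j (S i) ltac:(lia) ltac:(lia) Hj). rewrite Rmin_left by lra. pose proof (Hc (S i) ltac:(lia)). nra. }
 pose proof (sum_lab_ge1 n (fun k => c k * Rmin (orient (pp n i) (pp n j) (pp n k)) 0) (S i) ltac:(intros; apply Hterm; lia) ltac:(lia)).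
 simpl in *. lra. Qed.

Lemma caseB n i j c k0 : in_XQ n (pp n) c -> (1 <= i)%nat -> (i < j)%nat -> (j <= n)%nat ->
  (forall k, (1 <= k <= n)%nat -> (k < i \/ j < k)%nat -> c k < 0) -> (1 <= k0 <= n)%nat -> (k0 < i \/ j < k0)%nat ->
  pairing n (pp n) i j c > 0.
Proof. intros HX Hi Hij Hj Hc Hk0 Hk0'. rewrite pairing_shift by auto.
 assert (Hterm : forall k, (1 <= k <= n)%nat -> 0 <= c k * (Rmin (ll n i j k) 0 - ll n i j k)).
 { intros k Hk. destruct (Rle_dec (ll n i j k) 0).
   - rewrite Rmin_left by lra. lra.
   - rewrite Rmin_right by lra. pose proof (l_pos_inv n i j k Hij Hj Hk ltac:(unfold ll in *; lra)). pose proof (Hc k Hk H). nra. }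
 assert (Hpos : 0 < c k0 * (Rmin (ll n i j k0) 0 - ll n i j k0)).
 { pose proof (l_pos n i j k0 Hij Hk0' ltac:(lia) Hj). unfold ll. rewrite Rmin_right by lra. pose proof (Hc k0 Hk0 Hk0'). nra. }
 pose proof (sum_lab_ge1 n (fun k => c k * (Rmin (ll n i j k) 0 - ll n i j k)) k0 ltac:(intros; apply Hterm; lia) Hk0).
 simpl in *. lra. Qed.

Lemma caseC n i j c a b : in_XQ n (pp n) c -> (1 <= a)%nat -> (a < i)%nat -> (i < b)%nat -> (b < j)%nat -> (j < n)%nat ->
  (forall k, (1 <= k <= n)%nat -> k <> a -> k <> b -> c k < 0) ->
  c a * ((tt n a - tt n i) * (tt n a - tt n j)) < - c n * ((tt n n - tt n i) * (tt n n - tt n j)) ->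
  pairing n (pp n) i j c > 0.
Proof. intros HX Ha Hai Hib Hbj Hjn Hc Hsp. rewrite pairing_shift by auto.
 assert (Hterm : forall k, (1 <= k <= n)%nat -> k <> a -> 0 <= c k * (Rmin (ll n i j k) 0 - ll n i j k)).
 { intros k Hk Hka. destruct (Rle_dec (ll n i j k) 0).
   - rewrite Rmin_left by lra. lra.
   - rewrite Rmin_right by lra. pose proof (l_pos_inv n i j k ltac:(lia) ltac:(lia) Hk ltac:(unfold ll in *; lra)).
     pose proof (Hc k Hk Hka ltac:(lia)). nra. }
 pose proof (sum_lab_ge2 n (fun k => c k * (Rmin (ll n i j k) 0 - ll n i j k)) a n Hterm ltac:(lia) ltac:(lia) ltac:(lia)).
 simpl in H.
 pose proof (l_pos n i j a ltac:(lia) ltac:(lia) ltac:(lia) ltac:(lia)) as Pa.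
 pose proof (l_pos n i j n ltac:(lia) ltac:(lia) ltac:(lia) ltac:(lia)) as Pn.
 unfold ll in *. rewrite (Rmin_right _ 0) in H by lra. rewrite (Rmin_right (orient _ _ (pp n n)) 0) in H by lra.
 rewrite !orient_pp in *. pose proof (tt_lt n i j ltac:(lia) ltac:(lia)).
 assert (0 < - c a * ((tt n j - tt n i) * ((tt n a - tt n i) * (tt n a - tt n j))) + - c n * ((tt n j - tt n i) * ((tt n n - tt n i) * (tt n n - tt n j)))).
 { assert (E: forall u v w : R, - u * (w * v) = w * (- u * v)) by (intros; ring). rewrite !E.
   rewrite <- Rmult_plus_distr_l. apply Rmult_lt_0_compat; lra. }
 lra. Qed.

Lemma pairing_main n a b c i j : is_diag n a b -> is_diag n i j -> swap_rel n i j a b -> in_XQ n (pp n) c ->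
  0 < c a -> 0 < c b -> (forall k, (1 <= k <= n)%nat -> k <> a -> k <> b -> c k < 0) ->
  ((a < i)%nat -> (i < b)%nat -> (b < j)%nat -> (j < n)%nat -> (b - i > 1)%nat ->
     c a * ((tt n a - tt n i) * (tt n a - tt n j)) < - c n * ((tt n n - tt n i) * (tt n n - tt n j))) ->
  pairing n (pp n) i j c > 0.
Proof. intros Dab Dij Hsw HX Ha Hb Hc Hsp. unfold is_diag in *. unfold swap_rel, crossing in Hsw.
 destruct Hsw as [Hnc | Hs].
 - assert (Hcase : (((a <= i /\ j <= b) \/ j <= a \/ b <= i) \/ (i <= a /\ b <= j))%nat) by lia.
   destruct Hcase as [Hin | Hout].
   + apply caseA; try lia. intros k Hk. apply Hc; lia.
   + destruct (Nat.eq_dec i 1) as [Ei|Ei].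
     * apply (caseB n i j c (S j)); auto; try lia. intros k Hk Hk'. apply Hc; lia.
     * apply (caseB n i j c (i - 1)); auto; try lia. intros k Hk Hk'. apply Hc; lia.
 - apply (caseC n i j c a b); auto; try lia. apply Hsp; lia. Qed.

Definition Qab n a b k := (tt n k - tt n a) * (tt n k - tt n b).
Definition alf n a b (w : nat -> R) := sum_lab n (fun k => w k * (tt n b - tt n k)) / (tt n b - tt n a).
Definition bet n a b (w : nat -> R) := sum_lab n (fun k => w k * (tt n k - tt n a)) / (tt n b - tt n a).
Definition cof n a b (w : nat -> R) (k : nat) := ind a k * alf n a b w + ind b k * bet n a b w - w k.

Lemma moment n a b A B w g : (1 <= a <= n)%nat -> (1 <= b <= n)%nat ->
  sum_lab n (fun k => (ind a k * A + ind b k * B - w k) * g k) = A * g a + B * g b - sum_lab n (fun k => w k * g k).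
Proof. intros Ha Hb.
 transitivity (sum_lab n (fun k => A * (ind a k * g k) + (B * (ind b k * g k) + (-1) * (w k * g k)))).
 - apply sum_lab_ext; intros; ring.
 - rewrite sum_lab_add, sum_lab_add, !sum_lab_scal, !sum_ind_mul by auto. ring. Qed.

Lemma lin3 n u v x f g h : sum_lab n (fun k => u * f k + (v * g k + x * h k)) = u * sum_lab n f + v * sum_lab n g + x * sum_lab n h.
Proof. rewrite !sum_lab_add, !sum_lab_scal. ring. Qed.

Lemma gen_XQ n a b w : (1 <= a)%nat -> (a < b)%nat -> (b <= n)%nat ->
  sum_lab n (fun k => w k * Qab n a b k) = 0 -> in_XQ n (pp n) (cof n a b w).
Proof. intros Ha Hab Hb HQ. pose proof (tt_lt n a b Hab Hb) as Htab.
 set (ta := tt n a) in *. set (tb := tt n b) in *.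
 set (S1 := sum_lab n (fun k => w k * (tb - tt n k))).
 set (S2 := sum_lab n (fun k => w k * (tt n k - ta))).
 assert (E0 : S1 + S2 = (tb - ta) * sum_lab n w).
 { unfold S1, S2. rewrite <- sum_lab_add, <- sum_lab_scal. apply sum_lab_ext; intros; ring. }
 assert (E1 : ta * S1 + tb * S2 = (tb - ta) * sum_lab n (fun k => w k * tt n k)).
 { unfold S1, S2. rewrite <- sum_lab_lin, <- sum_lab_scal. apply sum_lab_ext; intros; ring. }
 assert (E2 : ta * ta * S1 + tb * tb * S2 = (tb - ta) * sum_lab n (fun k => w k * (tt n k * tt n k))).
 { assert (ta * ta * S1 + tb * tb * S2 + (-(tb - ta)) * sum_lab n (fun k => w k * (tt n k * tt n k)) = 0).
   { rewrite <- (Rmult_0_r (-(tb-ta))). rewrite <- HQ. unfold S1, S2. rewrite <- lin3, <- sum_lab_scal.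
     apply sum_lab_ext; intros; unfold Qab; fold ta tb; ring. }
   lra. }
 unfold in_XQ, cof, alf, bet. fold ta tb. fold S1 S2. split; [|split].
 - rewrite (sum_lab_ext n _ (fun k => (ind a k * (S1 / (tb - ta)) + ind b k * (S2 / (tb - ta)) - w k) * 1)) by (intros; ring).
   rewrite moment by lia. rewrite (sum_lab_ext n (fun k => w k * 1) w) by (intros; ring).
   field_simplify_eq; [|lra]. lra.
 - simpl. rewrite moment by lia. fold ta tb. field_simplify_eq; [|lra]. lra.
 - simpl. rewrite moment by lia. fold ta tb. field_simplify_eq; [|lra]. lra.
Qed.

Lemma gen_pos n a b w k0 : (1 <= a)%nat -> (a < b)%nat -> (b <= n)%nat ->
  sum_lab n (fun k => w k * Qab n a b k) = 0 -> (forall k, (1 <= k <= n)%nat -> 0 <= w k) ->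
  (1 <= k0 <= n)%nat -> k0 <> a -> k0 <> b -> 0 < w k0 -> 0 < alf n a b w /\ 0 < bet n a b w.
Proof. intros Ha Hab Hb HQ Hw Hk0 H1 H2 Hwk0. pose proof (tt_lt n a b Hab Hb) as Htab.
 assert (Da : tt n k0 <> tt n a).
 { destruct (lt_dec k0 a). pose proof (tt_lt n k0 a l ltac:(lia)); lra. pose proof (tt_lt n a k0 ltac:(lia) ltac:(lia)); lra. }
 assert (Db : tt n k0 <> tt n b).
 { destruct (lt_dec k0 b). pose proof (tt_lt n k0 b l ltac:(lia)); lra. pose proof (tt_lt n b k0 ltac:(lia) ltac:(lia)); lra. }
 unfold alf, bet. split; apply Rdiv_lt_0_compat; try lra.
 - assert (E : sum_lab n (fun k => w k * (tt n b - tt n k)) * (tt n b - tt n a) = sum_lab n (fun k => w k * ((tt n b - tt n k) * (tt n b - tt n k))) + (-1) * sum_lab n (fun k => w k * Qab n a b k)).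
   { rewrite Rmult_comm, <- !sum_lab_scal, <- sum_lab_add. apply sum_lab_ext; intros; unfold Qab; ring. }
   rewrite HQ in E.
   assert (0 < sum_lab n (fun k => w k * ((tt n b - tt n k) * (tt n b - tt n k)))).
   { eapply Rlt_le_trans; [|apply (sum_lab_ge1 _ _ k0)]; simpl; auto.
     - apply Rmult_lt_0_compat; auto. assert (tt n b - tt n k0 <> 0) by lra. pose proof (Rsqr_pos_lt _ H). unfold Rsqr in *. lra.
     - intros k Hk _. apply Rmult_le_pos; [apply Hw; lia|]. apply Rle_0_sqr. }
   assert (0 < sum_lab n (fun k => w k * (tt n b - tt n k)) * (tt n b - tt n a)) by lra. nra.
 - assert (E : sum_lab n (fun k => w k * (tt n k - tt n a)) * (tt n b - tt n a) = sum_lab n (fun k => w k * ((tt n k - tt n a) * (tt n k - tt n a))) + (-1) * sum_lab n (fun k => w k * Qab n a b k)).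
   { rewrite Rmult_comm, <- !sum_lab_scal, <- sum_lab_add. apply sum_lab_ext; intros; unfold Qab; ring. }
   rewrite HQ in E.
   assert (0 < sum_lab n (fun k => w k * ((tt n k - tt n a) * (tt n k - tt n a)))).
   { eapply Rlt_le_trans; [|apply (sum_lab_ge1 _ _ k0)]; simpl; auto.
     - apply Rmult_lt_0_compat; auto. assert (tt n k0 - tt n a <> 0) by lra. pose proof (Rsqr_pos_lt _ H). unfold Rsqr in *. lra.
     - intros k Hk _. apply Rmult_le_pos; [apply Hw; lia|]. apply Rle_0_sqr. }
   assert (0 < sum_lab n (fun k => w k * (tt n k - tt n a)) * (tt n b - tt n a)) by lra. nra.
Qed.

Lemma ind_eq a : ind a a = 1.
Proof. unfold ind. rewrite Nat.eqb_refl. auto. Qed.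
Lemma ind_neq a k : k <> a -> ind a k = 0.
Proof. intros H. unfold ind. destruct (Nat.eqb_spec k a); [lia|auto]. Qed.

Lemma cof_a n a b w : a <> b -> w a = 0 -> cof n a b w a = alf n a b w.
Proof. intros. unfold cof. rewrite ind_eq, ind_neq by auto. rewrite H0. ring. Qed.
Lemma cof_b n a b w : a <> b -> w b = 0 -> cof n a b w b = bet n a b w.
Proof. intros. unfold cof. rewrite ind_eq, ind_neq by auto. rewrite H0. ring. Qed.
Lemma cof_k n a b w k : k <> a -> k <> b -> cof n a b w k = - w k.
Proof. intros. unfold cof. rewrite !ind_neq by auto. ring. Qed.

Definition innb a b k := andb (Nat.ltb a k) (Nat.ltb k b).
Definition outb a b k := orb (Nat.ltb k a) (Nat.ltb b k).
Definition Sin n a b := sum_lab n (fun k => if innb a b k then 1 else 0).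
Definition Sout n a b := sum_lab n (fun k => if outb a b k then 1 else 0).
Definition wP n a b k := if innb a b k then Sout n a b / (- Qab n a b k)
  else if outb a b k then Sin n a b / Qab n a b k else 0.

Lemma Q_inner n a b k : (a < k)%nat -> (k < b)%nat -> (b <= n)%nat -> Qab n a b k < 0.
Proof. intros. unfold Qab. pose proof (tt_lt n a k ltac:(lia) ltac:(lia)). pose proof (tt_lt n k b ltac:(lia) ltac:(lia)). nra. Qed.

Lemma Q_outer n a b k : (a < b)%nat -> (k < a \/ b < k)%nat -> (k <= n)%nat -> (b <= n)%nat -> 0 < Qab n a b k.
Proof. intros. unfold Qab. destruct H0.
 - pose proof (tt_lt n k a ltac:(lia) ltac:(lia)). pose proof (tt_lt n k b ltac:(lia) ltac:(lia)). nra.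
 - pose proof (tt_lt n a k ltac:(lia) ltac:(lia)). pose proof (tt_lt n b k ltac:(lia) ltac:(lia)). nra. Qed.

Lemma ind01_nonneg (bb : bool) : 0 <= (if bb then 1 else 0).
Proof. destruct bb; lra. Qed.

Lemma Sin_pos n a b : (1 <= a)%nat -> (a + 2 <= b)%nat -> (b <= n)%nat -> 0 < Sin n a b.
Proof. intros. unfold Sin. eapply Rlt_le_trans; [|apply (sum_lab_ge1 _ _ (S a))].
 - unfold innb. destruct (Nat.ltb_spec a (S a)); [|lia]. destruct (Nat.ltb_spec (S a) b); [|lia]. simpl. lra.
 - intros; apply ind01_nonneg.
 - lia. Qed.

Lemma Sout_pos n a b : (1 <= a)%nat -> (a < b)%nat -> (b <= n)%nat -> ~ (a = 1 /\ b = n)%nat -> 0 < Sout n a b.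
Proof. intros. unfold Sout. destruct (Nat.eq_dec a 1).
 - eapply Rlt_le_trans; [|apply (sum_lab_ge1 _ _ n)].
   + unfold outb. destruct (Nat.ltb_spec b n); [|lia]. rewrite Bool.orb_true_r. lra.
   + intros; apply ind01_nonneg.
   + lia.
 - eapply Rlt_le_trans; [|apply (sum_lab_ge1 _ _ 1%nat)].
   + unfold outb. destruct (Nat.ltb_spec 1 a); [|lia]. simpl. lra.
   + intros; apply ind01_nonneg.
   + lia. Qed.

Section WP.
Variables n a b : nat.
Hypothesis Ha : (1 <= a)%nat.
Hypothesis Hab : (a + 2 <= b)%nat.
Hypothesis Hb : (b <= n)%nat.
Hypothesis Hnot : ~ (a = 1 /\ b = n)%nat.

Lemma wP_pos k : (1 <= k <= n)%nat -> k <> a -> k <> b -> 0 < wP n a b k.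
Proof. intros Hk H1 H2. pose proof (Sin_pos n a b Ha Hab Hb). pose proof (Sout_pos n a b Ha ltac:(lia) Hb Hnot).
 unfold wP, innb, outb. destruct (Nat.ltb_spec a k); destruct (Nat.ltb_spec k b); simpl.
 - pose proof (Q_inner n a b k ltac:(lia) ltac:(lia) Hb). apply Rdiv_lt_0_compat; lra.
 - destruct (Nat.ltb_spec k a); [lia|]. destruct (Nat.ltb_spec b k); [|lia]. simpl.
   pose proof (Q_outer n a b k ltac:(lia) ltac:(lia) ltac:(lia) Hb). apply Rdiv_lt_0_compat; lra.
 - destruct (Nat.ltb_spec k a); [|lia]. simpl.
   pose proof (Q_outer n a b k ltac:(lia) ltac:(lia) ltac:(lia) Hb). apply Rdiv_lt_0_compat; lra.
 - lia. Qed.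

Lemma wP_a : wP n a b a = 0.
Proof. unfold wP, innb, outb. rewrite Nat.ltb_irrefl. simpl. destruct (Nat.ltb_spec b a); [lia|]. auto. Qed.
Lemma wP_b : wP n a b b = 0.
Proof. unfold wP, innb, outb. rewrite Nat.ltb_irrefl. rewrite Bool.andb_false_r. destruct (Nat.ltb_spec b a); [lia|]. auto. Qed.

Lemma wP_nonneg k : (1 <= k <= n)%nat -> 0 <= wP n a b k.
Proof. intros. destruct (Nat.eq_dec k a). subst; rewrite wP_a; lra. destruct (Nat.eq_dec k b). subst; rewrite wP_b; lra.
 left; apply wP_pos; auto. Qed.

Lemma wP_Q : sum_lab n (fun k => wP n a b k * Qab n a b k) = 0.
Proof.
 transitivity (sum_lab n (fun k => Sin n a b * (if outb a b k then 1 else 0) + (- Sout n a b) * (if innb a b k then 1 else 0))).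
 - apply sum_lab_ext. intros k Hk. unfold wP, innb, outb.
   destruct (Nat.ltb_spec a k); destruct (Nat.ltb_spec k b); destruct (Nat.ltb_spec k a); destruct (Nat.ltb_spec b k); simpl; try lia.
   all: try ring.
   all: field; first [ pose proof (Q_inner n a b k ltac:(lia) ltac:(lia) Hb); lra | pose proof (Q_outer n a b k ltac:(lia) ltac:(lia) ltac:(lia) Hb); lra ].
 - rewrite sum_lab_lin. fold (Sin n a b) (Sout n a b). ring. Qed.
End WP.

Lemma key_pow (A P : R) : 0 < P -> P <= A / 2 -> A <= 1 / 2 ->
  (1 + P / 2) * (1 + P / 4) * (A - P) * A < (A - P / 2) * (A - P / 4) * (1 + P).
Proof. intros. assert (0 < A) by lra.
 assert (E : (A - P / 2) * (A - P / 4) * (1 + P) - (1 + P / 2) * (1 + P / 4) * (A - P) * A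
   = P * (A / 4 + P / 8 + A * A / 4 + P * P / 8 - A * A * P / 8 + A * P * P / 8)) by field.
 assert (0 < A / 4 + P / 8 + A * A / 4 + P * P / 8 - A * A * P / 8 + A * P * P / 8).
 { assert (A * A * P <= A * A * (1/4)) by (apply Rmult_le_compat_l; nra).
   assert (0 <= A * P * P) by (apply Rmult_le_pos; [nra|lra]). nra. }
 assert (0 < P * (A / 4 + P / 8 + A * A / 4 + P * P / 8 - A * A * P / 8 + A * P * P / 8)) by (apply Rmult_lt_0_compat; lra).
 lra. Qed.

Lemma special_real ta ti tb2 tb1 tb tj :
  ta < ti -> ti <= tb2 -> tb2 < tb1 -> tb1 < tb -> tb < tj -> tj < 0 ->
  (1 + ((tb1 - ta) * (tb - ta) * (1 - tb2) / ((1 - tb1) * (1 - tb) * (tb2 - ta) * (- ta)) - 1)) *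
    ((/ (- ((tb1 - ta) * (tb1 - tb))) * (tb - tb1) + / ((1 - ta) * (1 - tb)) * (tb - 1)) / (tb - ta))
    * ((ta - ti) * (ta - tj))
  < / ((1 - ta) * (1 - tb)) * ((1 - ti) * (1 - tj)).
Proof. intros.
 assert (Hcore : (1 - tb2) * ((ti - ta) * (tj - ta)) < (tb2 - ta) * (- ta) * ((1 - ti) * (1 - tj))).
 { assert (h1 : (1 - tb2) * (ti - ta) <= (tb2 - ta) * (1 - ti)) by nra.
   assert (h2 : tj - ta < (- ta) * (1 - tj)) by nra.
   assert (h3 : 0 <= (1 - tb2) * (ti - ta)) by nra.
   assert (h4 : 0 < (tb2 - ta) * (1 - ti)) by nra.
   assert ((1 - tb2) * (ti - ta) * (tj - ta) <= (tb2 - ta) * (1 - ti) * (tj - ta)) by (apply Rmult_le_compat_r; lra).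
   assert ((tb2 - ta) * (1 - ti) * (tj - ta) < (tb2 - ta) * (1 - ti) * ((- ta) * (1 - tj))) by (apply Rmult_lt_compat_l; lra).
   nra. }
 set (K := (1 - tb) * (tb2 - ta) * (- ta) * (1 - ta)).
 assert (HK : 0 < K) by (unfold K; repeat apply Rmult_lt_0_compat; lra).
 replace ((1 + ((tb1 - ta) * (tb - ta) * (1 - tb2) / ((1 - tb1) * (1 - tb) * (tb2 - ta) * (- ta)) - 1)) *
    ((/ (- ((tb1 - ta) * (tb1 - tb))) * (tb - tb1) + / ((1 - ta) * (1 - tb)) * (tb - 1)) / (tb - ta))
    * ((ta - ti) * (ta - tj))) with (((1 - tb2) * ((ti - ta) * (tj - ta))) / K).
 2:{ unfold K. field. repeat split; lra. }
 replace (/ ((1 - ta) * (1 - tb)) * ((1 - ti) * (1 - tj))) with (((tb2 - ta) * (- ta) * ((1 - ti) * (1 - tj))) / K).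
 2:{ unfold K. field. repeat split; lra. }
 unfold Rdiv. apply Rmult_lt_compat_r; [apply Rinv_0_lt_compat; auto | auto]. Qed.

Lemma half_pow_le i j : (i <= j)%nat -> (/2)^j <= (/2)^i.
Proof. intros. destruct (Nat.eq_dec i j). subst; lra. left; apply half_pow_lt; lia. Qed.

Definition delta n a b :=
  (tt n (b-1) - tt n a) * (tt n b - tt n a) * (1 - tt n (b-2)) /
  ((1 - tt n (b-1)) * (1 - tt n b) * (tt n (b-2) - tt n a) * (- tt n a)) - 1.

Lemma delta_pos n a b : (1 <= a)%nat -> (a + 3 <= b)%nat -> (b < n)%nat -> 0 < delta n a b.
Proof. intros Ha Hab Hb.
 set (A := (/2)^a). set (P := (/2)^(b-2)).
 assert (ta : tt n a = - A) by (unfold tt, A; destruct (Nat.ltb_spec a n); [auto|lia]).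
 assert (tb2 : tt n (b-2) = - P) by (unfold tt, P; destruct (Nat.ltb_spec (b-2) n); [auto|lia]).
 assert (tb1 : tt n (b-1) = - (P / 2)).
 { unfold tt, P; destruct (Nat.ltb_spec (b-1) n); [|lia]. replace (b-1)%nat with (S (b-2)) by lia. simpl. field. }
 assert (tb : tt n b = - (P / 4)).
 { unfold tt, P; destruct (Nat.ltb_spec b n); [|lia]. replace b with (S (S (b-2))) at 1 by lia. simpl. field. }
 assert (HP : 0 < P) by apply half_pow_pos.
 assert (HPA : P <= A / 2).
 { unfold P, A. replace (b-2)%nat with (S a + (b - 2 - S a))%nat by lia. rewrite pow_add.
   pose proof (half_pow_le 0 (b - 2 - S a) ltac:(lia)). simpl in *. pose proof (half_pow_pos a). nra. }
 assert (HA : A <= 1/2).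
 { unfold A. pose proof (half_pow_le 1 a Ha). simpl in H. lra. }
 unfold delta. rewrite ta, tb2, tb1, tb.
 pose proof (key_pow A P HP HPA HA).
 assert (HD : 0 < (1 - - (P / 2)) * (1 - - (P / 4)) * (- P - - A) * (- - A)) by (repeat apply Rmult_lt_0_compat; lra).
 replace ((- (P / 2) - - A) * (- (P / 4) - - A) * (1 - - P) / ((1 - - (P / 2)) * (1 - - (P / 4)) * (- P - - A) * (- - A)) - 1)
   with (((A - P / 2) * (A - P / 4) * (1 + P) - (1 + P / 2) * (1 + P / 4) * (A - P) * A) / ((1 - - (P / 2)) * (1 - - (P / 4)) * (- P - - A) * (- - A))).
 2:{ field. repeat split; lra. }
 apply Rdiv_lt_0_compat; lra. Qed.

Definition wM n a b k := ind (b-1) k * / (- Qab n a b (b-1)) + ind n k * / Qab n a b n.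

Section WM.
Variables n a b : nat.
Hypothesis Ha : (1 <= a)%nat.
Hypothesis Hab : (a + 2 <= b)%nat.
Hypothesis Hb : (b < n)%nat.

Lemma QM1 : Qab n a b (b-1) < 0.
Proof. apply Q_inner; lia. Qed.
Lemma QMn : 0 < Qab n a b n.
Proof. apply Q_outer; lia. Qed.

Lemma wM_Q : sum_lab n (fun k => wM n a b k * Qab n a b k) = 0.
Proof. pose proof QM1. pose proof QMn.
 transitivity (sum_lab n (fun k => (/ (- Qab n a b (b-1))) * (ind (b-1) k * Qab n a b k) + (/ Qab n a b n) * (ind n k * Qab n a b k))).
 - apply sum_lab_ext; intros; unfold wM; ring.
 - rewrite sum_lab_lin, !sum_ind_mul by lia. field. lra. Qed.

Lemma ind_nonneg c k : 0 <= ind c k.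
Proof. unfold ind; destruct (Nat.eqb k c); lra. Qed.

Lemma wM_nonneg k : 0 <= wM n a b k.
Proof. pose proof QM1. pose proof QMn. unfold wM.
 pose proof (ind_nonneg (b-1) k). pose proof (ind_nonneg n k).
 assert (0 < / (- Qab n a b (b-1))) by (apply Rinv_0_lt_compat; lra).
 assert (0 < / Qab n a b n) by (apply Rinv_0_lt_compat; lra). nra. Qed.

Lemma wM_a : wM n a b a = 0.
Proof. unfold wM. rewrite !ind_neq by lia. ring. Qed.
Lemma wM_b : wM n a b b = 0.
Proof. unfold wM. rewrite !ind_neq by lia. ring. Qed.
Lemma wM_b1 : 0 < wM n a b (b-1).
Proof. pose proof QM1. unfold wM. rewrite ind_eq, (ind_neq n) by lia.
 assert (0 < / (- Qab n a b (b-1))) by (apply Rinv_0_lt_compat; lra). lra. Qed.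
Lemma wM_n : wM n a b n = / Qab n a b n.
Proof. unfold wM. rewrite ind_eq, (ind_neq (b-1)) by lia. ring. Qed.

Lemma alf_wM : alf n a b (wM n a b) = (/ (- Qab n a b (b-1)) * (tt n b - tt n (b-1)) + / Qab n a b n * (tt n b - tt n n)) / (tt n b - tt n a).
Proof. unfold alf. f_equal.
 transitivity (sum_lab n (fun k => (/ (- Qab n a b (b-1))) * (ind (b-1) k * (tt n b - tt n k)) + (/ Qab n a b n) * (ind n k * (tt n b - tt n k)))).
 - apply sum_lab_ext; intros; unfold wM; ring.
 - rewrite sum_lab_lin, !sum_ind_mul by lia. ring. Qed.
End WM.

Definition eta n a b := if andb (Nat.ltb b n) (Nat.leb (a+3) b)
  then delta n a b * alf n a b (wM n a b) / alf n a b (wP n a b) else 1.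
Definition wt n a b k := (if Nat.ltb b n then wM n a b k else 0) + eta n a b * wP n a b k.
Definition cvec n a b := cof n a b (wt n a b).

Lemma alf_lin n a b u v e : alf n a b (fun k => u k + e * v k) = alf n a b u + e * alf n a b v.
Proof. unfold alf. rewrite (sum_lab_ext n _ (fun k => 1 * (u k * (tt n b - tt n k)) + e * (v k * (tt n b - tt n k)))) by (intros; ring).
 rewrite sum_lab_lin. unfold Rdiv. ring. Qed.

Section Final.
Variables n a b : nat.
Hypothesis D : is_diag n a b.

Let Ha : (1 <= a)%nat. Proof. unfold is_diag in D; lia. Qed.
Let Hab : (a + 2 <= b)%nat. Proof. unfold is_diag in D; lia. Qed.
Let Hb : (b <= n)%nat. Proof. unfold is_diag in D; lia. Qed.
Let Hnot : ~ (a = 1 /\ b = n)%nat. Proof. unfold is_diag in D; tauto. Qed.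

Lemma alfP_pos : 0 < alf n a b (wP n a b).
Proof. apply (gen_pos n a b (wP n a b) (S a)); try lia.
 apply wP_Q; auto. intros; apply wP_nonneg; auto. apply wP_pos; auto; lia. Qed.

Lemma alfM_pos : (b < n)%nat -> 0 < alf n a b (wM n a b).
Proof. intros H. apply (gen_pos n a b (wM n a b) (b-1)); try lia.
 apply wM_Q; lia. intros; apply wM_nonneg; lia. apply wM_b1; lia. Qed.

Lemma eta_pos : 0 < eta n a b.
Proof. unfold eta. destruct (Nat.ltb_spec b n); destruct (Nat.leb_spec (a+3) b); simpl; try lra.
 pose proof (delta_pos n a b Ha ltac:(lia) ltac:(lia)). pose proof (alfM_pos ltac:(lia)). pose proof alfP_pos.
 apply Rdiv_lt_0_compat; [apply Rmult_lt_0_compat|]; lra. Qed.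

Lemma wt_Q : sum_lab n (fun k => wt n a b k * Qab n a b k) = 0.
Proof. unfold wt. destruct (Nat.ltb_spec b n).
 - rewrite (sum_lab_ext n _ (fun k => 1 * (wM n a b k * Qab n a b k) + eta n a b * (wP n a b k * Qab n a b k))) by (intros; ring).
   rewrite sum_lab_lin, wM_Q, wP_Q by (auto; lia). ring.
 - rewrite (sum_lab_ext n _ (fun k => eta n a b * (wP n a b k * Qab n a b k))) by (intros; ring).
   rewrite sum_lab_scal, wP_Q by auto. ring. Qed.

Lemma wt_nonneg k : (1 <= k <= n)%nat -> 0 <= wt n a b k.
Proof. intros. unfold wt. pose proof eta_pos. pose proof (wP_nonneg n a b Ha Hab Hb Hnot k H).
 destruct (Nat.ltb_spec b n).
 - pose proof (wM_nonneg n a b ltac:(lia) ltac:(lia) ltac:(lia) k). nra.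
 - nra. Qed.

Lemma wt_pos k : (1 <= k <= n)%nat -> k <> a -> k <> b -> 0 < wt n a b k.
Proof. intros. unfold wt. pose proof eta_pos. pose proof (wP_pos n a b Ha Hab Hb Hnot k H H0 H1).
 destruct (Nat.ltb_spec b n).
 - pose proof (wM_nonneg n a b ltac:(lia) ltac:(lia) ltac:(lia) k). nra.
 - nra. Qed.

Lemma wt_a : wt n a b a = 0.
Proof. unfold wt. rewrite wP_a by lia. destruct (Nat.ltb_spec b n). rewrite wM_a by lia. ring. ring. Qed.
Lemma wt_b : wt n a b b = 0.
Proof. unfold wt. rewrite wP_b by lia. destruct (Nat.ltb_spec b n). rewrite wM_b by lia. ring. ring. Qed.

Lemma cvec_XQ : in_XQ n (pp n) (cvec n a b).
Proof. apply gen_XQ; try lia. apply wt_Q. Qed.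

Lemma cvec_signs : 0 < cvec n a b a /\ 0 < cvec n a b b /\ (forall k, (1 <= k <= n)%nat -> k <> a -> k <> b -> cvec n a b k < 0).
Proof. destruct (gen_pos n a b (wt n a b) (S a)) as [P1 P2]; try lia.
 apply wt_Q. apply wt_nonneg. apply wt_pos; lia.
 unfold cvec. split; [|split].
 - rewrite cof_a by (try lia; apply wt_a). auto.
 - rewrite cof_b by (try lia; apply wt_b). auto.
 - intros k Hk H1 H2. rewrite cof_k by auto. pose proof (wt_pos k Hk H1 H2). lra. Qed.

Lemma cvec_special i j : (a < i)%nat -> (i < b)%nat -> (b < j)%nat -> (j < n)%nat -> (b - i > 1)%nat ->
  cvec n a b a * ((tt n a - tt n i) * (tt n a - tt n j)) < - cvec n a b n * ((tt n n - tt n i) * (tt n n - tt n j)).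
Proof. intros H1 H2 H3 H4 H5.
 assert (Eeta : eta n a b = delta n a b * alf n a b (wM n a b) / alf n a b (wP n a b)).
 { unfold eta. destruct (Nat.ltb_spec b n); [|lia]. destruct (Nat.leb_spec (a+3) b); [|lia]. auto. }
 assert (Eca : cvec n a b a = (1 + delta n a b) * alf n a b (wM n a b)).
 { unfold cvec. rewrite cof_a by (try lia; apply wt_a). unfold wt. destruct (Nat.ltb_spec b n); [|lia].
   rewrite alf_lin, Eeta. pose proof alfP_pos. field. lra. }
 assert (Ecn : - cvec n a b n = wt n a b n).
 { unfold cvec. rewrite cof_k by lia. ring. }
 assert (Hwn : / Qab n a b n <= wt n a b n).
 { unfold wt. destruct (Nat.ltb_spec b n); [|lia]. rewrite wM_n by lia. pose proof eta_pos. pose proof (wP_nonneg n a b Ha Hab Hb Hnot n ltac:(lia)). nra. }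
 assert (HQn : 0 < (tt n n - tt n i) * (tt n n - tt n j)).
 { pose proof (tt_lt n i n ltac:(lia) ltac:(lia)). pose proof (tt_lt n j n ltac:(lia) ltac:(lia)). nra. }
 rewrite Eca, Ecn.
 apply Rlt_le_trans with (/ Qab n a b n * ((tt n n - tt n i) * (tt n n - tt n j))).
 2:{ apply Rmult_le_compat_r; lra. }
 rewrite alf_wM by lia. unfold delta, Qab. rewrite tt_n.
 apply special_real.
 - apply tt_lt; lia.
 - apply tt_le; lia.
 - apply tt_lt; lia.
 - apply tt_lt; lia.
 - apply tt_lt; lia.
 - apply tt_neg; lia.
Qed.
End Final.

Theorem lemma3p2 :
  forall n : nat, (4 <= n)%nat ->
  exists p : nat -> pt,
    convex_ngon n p /\
    exists x : nat -> nat -> (nat -> R),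
      (forall i j, is_diag n i j -> in_XQ n p (x i j)) /\
      (forall i j i' j', is_diag n i j -> is_diag n i' j' ->
         swap_rel n i j i' j' -> pairing n p i j (x i' j') > 0).
Proof. intros n Hn. exists (pp n). split; [apply convex_pp|].
 exists (fun a b => cvec n a b). split.
 - intros i j D. apply cvec_XQ; auto.
 - intros i j a b Dij Dab Hsw. destruct (cvec_signs n a b Dab) as [S1 [S2 S3]].
   apply (pairing_main n a b (cvec n a b) i j); auto.
   + apply cvec_XQ; auto.
   + intros. apply cvec_special; auto.
Qed.
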